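(* Let $X$ be a set, let $T:\mathcal P(X)\to\mathcal P(X)$ be an order reversing quasi involution, and let $X_0=\{x\in X:\ x\in T(\{x\})\}$. Let $K_0\subseteq X$ satisfy $K_0\subseteq TK_0$. Then there exists $K\subseteq X$ with $K_0\subseteq K$ and $TK\cap X_0=K$. In particular, if $X=X_0$, then for every $x_0\in X$ there exists $K\subseteq X$ with $x_0\in K=TK$.
   Context: $\mathcal P(X)$ denotes the power set of $X$. A map $T:\mathcal P(X)\to\mathcal P(X)$ is an order reversing quasi involution if for all $K,L\subseteq X$: (i) $K\subseteq TTK$, and (ii) $L\subseteq K$ implies $TK\subseteq TL$. *)

(* Defs.v *)
From mathcomp Require Import all_boot.
From mathcomp Require Import boolp classical_sets.
Set Implicit Arguments. Unset Strict Implicit. Unset Printing Implicit Defensive.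
Local Open Scope classical_set_scope.

Definition order_reversing_quasi_involution (X : Type) (T : set X -> set X) : Prop :=
  (forall K : set X, K `<=` T (T K)) /\
  (forall K L : set X, L `<=` K -> T K `<=` T L).

Definition X0 (X : Type) (T : set X -> set X) : set X :=
  [set x | T [set x] x].

(* Main.v *)
Require Import Defs.
From mathcomp Require Import all_boot.
From mathcomp Require Import boolp classical_sets.
Local Open Scope classical_set_scope.

Section S.
Variables (X : Type) (T : set X -> set X).
Hypothesis HT : order_reversing_quasi_involution T.

Lemma memT K x : T K x <-> K `<=` T [set x].
Proof.
case: HT => H1 H2; split.
- move=> Kx; have : [set x] `<=` T K by move=> y ->.
  move=> /H2 h; exact: (subset_trans (H1 K) h).
- move=> /H2 h; apply: h; apply: H1; reflexivity.
Qed.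

Lemma symT x y : T [set x] y <-> T [set y] x.
Proof.
rewrite (propext (memT [set x] y)); split.
- by move=> h; apply: h.
- by move=> h z ->.
Qed.

Lemma inT K x : T K x <-> (forall y, K y -> T [set y] x).
Proof.
rewrite (propext (memT K x)); split.
- by move=> h y Ky; apply/symT; apply: h.
- by move=> h y Ky; apply/symT; apply: h.
Qed.

End S.
Arguments memT {X T} HT {K x}.
Arguments symT {X T} HT {x y}.
Arguments inT {X T} HT {K x}.

Theorem theorem1p4 (X : Type) (T : set X -> set X) :
  order_reversing_quasi_involution T ->
  (forall K0 : set X, K0 `<=` T K0 ->
     exists K : set X, K0 `<=` K /\ T K `&` X0 T = K) /\
  (X0 T = setT ->
     forall x0 : X, exists K : set X, K x0 /\ K = T K).
Proof.
move=> HT.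
have part1 : forall K0 : set X, K0 `<=` T K0 ->
     exists K : set X, K0 `<=` K /\ T K `&` X0 T = K.
  move=> K0 HK0.
  pose P := [set A : set X | K0 `|` A `<=` T (K0 `|` A)].
  have [A [PA Amax]] : exists A, P A /\ forall B, A `<` B -> ~ P B.
    apply: Zorn_bigcup => F FP Ftot.
    rewrite /P => x Hx; apply/(inT HT) => y Hy.
    have key : forall A, P A -> (K0 `|` A) x -> (K0 `|` A) y -> T [set y] x.
      move=> A PA ax ay; have := PA x ax => /(inT HT) h; exact: h.
    case: Hx => [Hx|[A1 FA1 Hx]]; case: Hy => [Hy|[A2 FA2 Hy]].
    - apply: (key set0) => //; [| by left | by left].
      move=> z [z0|//]; apply: (proj2 HT K0 (K0 `|` set0)); last exact: HK0 z0.
      by move=> w [|[]].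
    - by apply: (key A2 (FP _ FA2)); [left|right].
    - by apply: (key A1 (FP _ FA1)); [right|left].
    - case: (Ftot _ _ FA1 FA2) => s.
      + by apply: (key A2 (FP _ FA2)); right => //; apply: s.
      + by apply: (key A1 (FP _ FA1)); right => //; apply: s.
  exists (K0 `|` A); split; first by move=> z; left.
  have X0K : forall z, (K0 `|` A) z -> X0 T z.
    move=> z Kz; rewrite /X0 /=.
    by have := PA z Kz => /(inT HT) h; apply: h.
  apply/seteqP; split; last first.
    by move=> z Kz; split; [exact: PA | exact: X0K].
  move=> x [Tx X0x]; apply: contrapT => nx.
  apply: (Amax (K0 `|` A `|` [set x])).
    split.
      by move=> z Az; left; right.
    move=> h; apply: nx; right; apply: h; right; reflexivity.
  rewrite /P => z Hz; apply/(inT HT) => y Hy.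
  have Kin : forall u, (K0 `|` (K0 `|` A `|` [set x])) u -> (K0 `|` A) u \/ u = x.
    by move=> u [u0|[[u0|u1]|->]]; [left; left|left; left|left; right|right].
  case: (Kin _ Hz) => [Kz|->]; case: (Kin _ Hy) => [Ky|->].
  - by have := PA z Kz => /(inT HT) h; apply: h.
  - by apply/(symT HT); move: Tx => /(inT HT) h; apply: h.
  - by move: Tx => /(inT HT) h; apply: h.
  - exact: X0x.
split => // HX x0.
have h0 : [set x0] `<=` T [set x0].
  by move=> z ->; have : X0 T x0 by rewrite HX.
have [K [sK eK]] := part1 [set x0] h0.
exists K; split; first exact: sK.
by rewrite -[in LHS]eK HX setIT.
Qed.
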